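(* Let $M$ be a nest with standard labelling. Then: (i) if $C$ is a non-spanning circuit of $M$, then $|C|\in\{4,6\}$; (ii) if $C$ is a circuit of $M$ with $|C|=4$, then $C$ is one of the $15$ circuits listed in condition (1) of the definition of a nest; (iii) if $\{e_i,e_j,e_k',e_\ell'\}$ is a circuit of $M$, then $\{e_i,e_j\}\cup(\{e_1',\dots,e_6'\}-\{e_k',e_\ell'\})$ and $(\{e_1,\dots,e_6\}-\{e_i,e_j\})\cup\{e_k',e_\ell'\}$ are $6$-element circuits of $M$; (iv) if $C$ is a circuit of $M$ with $|C|=6$ that is not described in (iii), then $C\in\{\{e_1,\dots,e_6\},\{e_1',\dots,e_6'\}\}$.
   Context: A matroid $M$ is a nest if $r(M)=r^*(M)=6$ and its ground set has a labelling $\{e_1,e_1',\dots,e_6,e_6'\}$ such that (1) the following sets are circuits: $\{e_1,e_2,e_3',e_4'\}$, $\{e_3,e_4,e_5',e_6'\}$, $\{e_5,e_6,e_1',e_2'\}$, $\{e_5,e_4,e_1',e_3'\}$, $\{e_1,e_3,e_2',e_6'\}$, $\{e_2,e_6,e_5',e_4'\}$, $\{e_2,e_3,e_5',e_1'\}$, $\{e_5,e_1,e_4',e_6'\}$, $\{e_4,e_6,e_2',e_3'\}$, $\{e_4,e_1,e_2',e_5'\}$, $\{e_2,e_5,e_3',e_6'\}$, $\{e_3,e_6,e_4',e_1'\}$, $\{e_3,e_5,e_4',e_2'\}$, $\{e_4,e_2,e_1',e_6'\}$, $\{e_1,e_6,e_3',e_5'\}$; and (2) the following sets are cocircuits: $\{e_3,e_4,e_1',e_2'\}$,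 $\{e_1,e_2,e_5',e_6'\}$, $\{e_5,e_6,e_3',e_4'\}$, $\{e_1,e_3,e_5',e_4'\}$, $\{e_5,e_4,e_2',e_6'\}$, $\{e_2,e_6,e_1',e_3'\}$, $\{e_5,e_1,e_2',e_3'\}$, $\{e_2,e_3,e_4',e_6'\}$, $\{e_4,e_6,e_5',e_1'\}$, $\{e_2,e_5,e_4',e_1'\}$, $\{e_4,e_1,e_3',e_6'\}$, $\{e_3,e_6,e_2',e_5'\}$, $\{e_4,e_2,e_3',e_5'\}$, $\{e_3,e_5,e_1',e_6'\}$, $\{e_1,e_6,e_4',e_2'\}$. $M$ has standard labelling if its ground set is literally $\{e_1,e_1',\dots,e_6,e_6'\}$ with this labelling being the identity. *)

(* Defs.v *)
From mathcomp Require Import all_boot.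
Set Implicit Arguments. Unset Strict Implicit. Unset Printing Implicit Defensive.

Record matroid (T : finType) := Matroid {
  indep : {set T} -> bool;
  indep0 : indep set0;
  indep_sub : forall A B : {set T}, A \subset B -> indep B -> indep A;
  indep_aug : forall A B : {set T}, indep A -> indep B -> #|A| < #|B| ->
     exists2 x, x \in B :\: A & indep (x |: A)
}.

Section MatroidNotions.
Variable T : finType.
Variable M : matroid T.

Definition is_basis (B : {set T}) : bool :=
  indep M B && [forall C : {set T}, (indep M C && (B \subset C)) ==> (C == B)].

Definition rk (X : {set T}) : nat := \max_(A : {set T} | indep M A && (A \subset X)) #|A|.
Definition rank : nat := rk setT.

Definition dual_indep (A : {set T}) : bool :=
  [exists B : {set T}, is_basis B && (A \subset ~: B)].
Definition corank : nat :=
  \max_(A : {set T} | dual_indep A) #|A|.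

Definition min_dep (I : {set T} -> bool) (C : {set T}) : bool :=
  ~~ I C && [forall D : {set T}, (D \proper C) ==> I D].
Definition circuit (C : {set T}) : bool := min_dep (indep M) C.
Definition cocircuit (C : {set T}) : bool := min_dep dual_indep C.
Definition spanning (X : {set T}) : bool := rk X == rank.
End MatroidNotions.

(* Standard ground set {e_1,e_1',...,e_6,e_6'}: e_i = (i,false), e_i' = (i,true),
   with indices i : 'I_6 (0-based: paper's e_1 is e ord0, ..., e_6 is e 5). *)
Definition Gnd := ('I_6 * bool)%type.
Definition e (i : 'I_6) : Gnd := (i, false).
Definition e' (i : 'I_6) : Gnd := (i, true).
Definition Eset : {set Gnd} := [set e i | i : 'I_6].
Definition E'set : {set Gnd} := [set e' i | i : 'I_6].

(* 1-based index conversion used only for transcribing the paper's lists *)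
Definition ix (n : nat) : 'I_6 := inord n.-1.
Definition quad (i j k l : 'I_6) : {set Gnd} := [set e i; e j; e' k; e' l].
Definition quadn (q : nat * nat * nat * nat) : {set Gnd} :=
  let: (i, j, k, l) := q in quad (ix i) (ix j) (ix k) (ix l).

(* the 15 circuits of condition (1), 1-based as in the paper: (i,j,k,l) = {e_i,e_j,e_k',e_l'} *)
Definition nest_circuits : seq (nat * nat * nat * nat) :=
  [:: (1,2,3,4); (3,4,5,6); (5,6,1,2); (5,4,1,3); (1,3,2,6); (2,6,5,4);
      (2,3,5,1); (5,1,4,6); (4,6,2,3); (4,1,2,5); (2,5,3,6); (3,6,4,1);
      (3,5,4,2); (4,2,1,6); (1,6,3,5)].
Definition nest_cocircuits : seq (nat * nat * nat * nat) :=
  [:: (3,4,1,2); (1,2,5,6); (5,6,3,4); (1,3,5,4); (5,4,2,6); (2,6,1,3);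
      (5,1,2,3); (2,3,4,6); (4,6,5,1); (2,5,4,1); (4,1,3,6); (3,6,2,5);
      (4,2,3,5); (3,5,1,6); (1,6,4,2)].

Definition std_nest (M : matroid Gnd) : Prop :=
  rank M = 6 /\ corank M = 6 /\
  (forall q, q \in nest_circuits -> circuit M (quadn q)) /\
  (forall q, q \in nest_cocircuits -> cocircuit M (quadn q)).

Definition six1 (i j k l : 'I_6) : {set Gnd} := [set e i; e j] :|: (E'set :\: [set e' k; e' l]).
Definition six2 (i j k l : 'I_6) : {set Gnd} := (Eset :\: [set e i; e j]) :|: [set e' k; e' l].

(* Main.v *)
Require Import Defs.
From mathcomp Require Import all_boot.
Set Implicit Arguments. Unset Strict Implicit. Unset Printing Implicit Defensive.

Lemma indep_le (T : finType) (M : matroid T) A : indep M A -> #|A| <= rank M.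
Proof. by move=> iA; rewrite /rank /rk; apply: (leq_bigmax_cond A); rewrite iA subsetT. Qed.

Lemma rank_attained (T : finType) (M : matroid T) : exists2 A, indep M A & #|A| = rank M.
Proof.
have [|A0 HA0 E] := @eq_bigmax_cond _ [pred S : {set T} | indep M S && (S \subset setT)] (fun S => #|S|).
  by apply/card_gt0P; exists set0; rewrite inE indep0 sub0set.
exists A0; first by move: HA0; rewrite inE => /andP[].
by rewrite /rank /rk; symmetry; exact: E.
Qed.

Lemma basis_of_card (T : finType) (M : matroid T) B : indep M B -> #|B| = rank M -> is_basis M B.
Proof.
move=> iB cB; rewrite /is_basis iB /=; apply/forallP => C; apply/implyP => /andP[iC sBC].
by rewrite eq_sym eqEcard sBC /= cB indep_le.
Qed.

Lemma basis_card (T : finType) (M : matroid T) B : is_basis M B -> #|B| = rank M.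
Proof.
case/andP => iB /forallP mB; apply/eqP; rewrite eqn_leq indep_le //=.
have [A iA <-] := rank_attained M; rewrite leqNgt; apply/negP => lt.
have [x /setDP[xA xB] ix] := indep_aug iB iA lt.
have := mB (x |: B); rewrite ix subsetUr /= => /eqP E.
by move: xB; rewrite -E setU11.
Qed.

Lemma aug_to (T : finType) (M : matroid T) n : forall A B, indep M A -> indep M B ->
  #|A| <= n -> n <= #|B| ->
  exists A', [/\ indep M A', A \subset A', A' \subset A :|: B & #|A'| = n].
Proof.
move=> A B; move Hk: (n - #|A|) => k; elim: k A Hk => [|k IH] A Hk iA iB lAn lnB.
  exists A; split => //; first exact: subsetUl.
  by apply/eqP; rewrite eqn_leq lAn /= -subn_eq0 Hk.
have ltAB : #|A| < #|B| by apply: leq_trans lnB; rewrite -subn_gt0 Hk.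
have [x /setDP[xB xA] ix] := indep_aug iA iB ltAB.
have cx : #|x |: A| = #|A|.+1 by rewrite cardsU1 xA.
have [||A' [iA' sA' sA'' cA']] := IH (x |: A) _ ix iB _ lnB.
- by rewrite cx subnS Hk.
- by rewrite cx -subn_gt0 Hk.
exists A'; split => //; first exact: subset_trans (subsetUr _ _) sA'.
apply: (subset_trans sA''); apply/subsetP => y; rewrite !inE.
by case/orP => [/orP[/eqP->|->]|->]; rewrite ?xB ?orbT.
Qed.

Lemma circuit_ortho (T : finType) (M : matroid T) C D x :
  circuit M C -> cocircuit M D -> x \in C -> x \in D ->
  (forall y, y \in C -> y \in D -> y = x) -> False.
Proof.
move=> /andP[dC /forallP pC] /andP[dD /forallP pD] xC xD Hy.
have /existsP[B0 /andP[bB0 sB0]] : dual_indep M (D :\ x).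
  by have := pD (D :\ x); rewrite properD1.
have iJ : indep M (C :\ x) by have := pC (C :\ x); rewrite properD1.
have iB0 : indep M B0 by case/andP: bB0.
have [J' [iJ' sJ sJ' cJ']] := aug_to iJ iB0 (indep_le iJ) (eq_leq (esym (basis_card bB0))).
have bJ' := basis_of_card iJ' cJ'.
case: (boolP (x \in J')) => xJ.
  move/negP: dC; apply; apply: (indep_sub _ iJ'); apply/subsetP => y yC.
  case: (y =P x) => [->//|/eqP ne]; apply: (subsetP sJ); by rewrite !inE ne yC.
move/negP: dD; apply; apply/existsP; exists J'; rewrite bJ' /=.
apply/subsetP => y yD; rewrite inE; apply/negP => yJ.
have := subsetP sJ' y yJ; rewrite !inE => /orP[/andP[ne yC]|yB].
  by move: ne; rewrite (Hy y yC yD) eqxx.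
case: (y =P x) => [E|/eqP ne]; first by move: xJ; rewrite -E yJ.
have := subsetP sB0 y; rewrite !inE ne yD yB => /(_ isT) //.
Qed.

Lemma dep_circuit (T : finType) (M : matroid T) S : ~~ indep M S -> exists2 C, circuit M C & C \subset S.
Proof.
elim: {S}_.+1 {-2}S (ltnSn #|S|) => // n IH S ltS dS.
case: (boolP [forall D : {set T}, (D \proper S) ==> indep M D]) => H.
  by exists S; rewrite // /circuit /min_dep dS.
move/forallPn: H => [D]; rewrite negb_imply => /andP[pDS dD].
have [|C cC sCD] := IH D _ dD; first exact: leq_trans (proper_card pDS) ltS.
exists C => //; exact: subset_trans sCD (proper_sub pDS).
Qed.

Lemma circuit_proper (T : finType) (M : matroid T) (C D : {set T}) : circuit M C -> D \proper C -> indep M D.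
Proof. by case/andP => _ /forallP/(_ D)/implyP. Qed.

Lemma circuit_sub_eq (T : finType) (M : matroid T) (C Q : {set T}) : circuit M C -> circuit M Q -> Q \subset C -> Q = C.
Proof.
move=> cC cQ sQC; apply/eqP; apply/negPn/negP => ne.
have := circuit_proper cC (_ : Q \proper C); rewrite properEneq ne sQC => /(_ isT).
by case/andP: cQ => /negP.
Qed.

Lemma dep6 (T : finType) (M : matroid T) (X D : {set T}) : #|X| = rank M -> cocircuit M D -> D \subset ~: X -> ~~ indep M X.
Proof.
move=> cX cD sD; apply/negP => iX; have bX := basis_of_card iX cX.
case/andP: cD => /negP H _; apply: H; apply/existsP; exists X; by rewrite bX sD.
Qed.
Definition o (n : nat) : 'I_6 := match n with
 | 1 => @Ordinal 6 0 isT | 2 => @Ordinal 6 1 isT | 3 => @Ordinal 6 2 isT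
 | 4 => @Ordinal 6 3 isT | 5 => @Ordinal 6 4 isT | _ => @Ordinal 6 5 isT end.
Definition G12 : seq Gnd := Eval vm_compute in [seq (o n, b) | n <- iota 1 6, b <- [:: false; true]].

Lemma memG12 x : x \in G12.
Proof. by case: x => -[[|[|[|[|[|[|m]]]]]] Hm] []. Qed.

Lemma uniqG12 : uniq G12. Proof. by vm_compute. Qed.
Lemma sizeG12 : size G12 = 12. Proof. by []. Qed.

Lemma card_count (A : {set Gnd}) : #|A| = count (fun x => x \in A) G12.
Proof.
rewrite cardE -size_filter; apply: perm_size; apply: uniq_perm.
- exact: enum_uniq.
- by rewrite filter_uniq // uniqG12.
- by move=> x; rewrite mem_enum mem_filter memG12 andbT.
Qed.

Fixpoint allbits n : seq (seq bool) :=
  if n is n'.+1 then [seq b :: s | b <- [:: true; false], s <- allbits n'] else [:: [::]].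
Lemma allbitsP s : s \in allbits (size s).
Proof.
elim: s => [|b s IH] //.
change (b :: s \in [seq c :: t | c <- [:: true; false], t <- allbits (size s)]).
apply/allpairsP; exists (b, s); split => //; by case: b.
Qed.

Definition qb (q : nat * nat * nat * nat) (x : Gnd) : bool :=
  let: (i, j, k, l) := q in [|| x == e (o i), x == e (o j), x == e' (o k) | x == e' (o l)].
Definition s1b (q : nat * nat * nat * nat) (x : Gnd) : bool :=
  let: (i, j, k, l) := q in [|| x == e (o i), x == e (o j) | [&& x.2, x != e' (o k) & x != e' (o l)]].
Definition s2b (q : nat * nat * nat * nat) (x : Gnd) : bool :=
  let: (i, j, k, l) := q in [|| [&& ~~ x.2, x != e (o i) & x != e (o j)], x == e' (o k) | x == e' (o l)].
Definition bitsof (p : Gnd -> bool) := map p G12.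
Definition targets : seq (seq bool) :=
  [seq bitsof (qb q) | q <- nest_circuits] ++ [seq bitsof (s1b q) | q <- nest_circuits] ++
  [seq bitsof (s2b q) | q <- nest_circuits] ++ [:: bitsof (fun x => ~~ x.2); bitsof (fun x => x.2)].

Definition qidx (q : nat * nat * nat * nat) : seq nat :=
  let: (i, j, k, l) := q in [:: (i.-1).*2; (j.-1).*2; (k.-1).*2.+1; (l.-1).*2.+1].
Definition ortho' (s : seq bool) (d : seq nat) :=
  all (fun i => nth false s i ==> has (fun j => (j != i) && nth false s j) d) d.
Definition quad' (s : seq bool) (d : seq nat) :=
  all (nth false s) d ==> all (fun j => nth false s j ==> (j \in d)) (iota 0 12).
Definition chk (s : seq bool) :=
  [&& 0 < count id s, count id s <= 6,
      all (fun q => ortho' s (qidx q)) nest_cocircuits &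
      all (fun q => quad' s (qidx q)) nest_circuits].
Definition targetsL := Eval vm_compute in targets.
Lemma targetsE : targets = targetsL. Proof. by vm_compute. Qed.

Lemma keycheck : all (fun s => chk s ==> (s \in targetsL)) (allbits 12).
Proof. vm_compute. reflexivity. Qed.
Lemma key s : size s = 12 -> chk s -> s \in targets.
Proof.
move=> ss cs; rewrite targetsE.
have := allbitsP s; rewrite ss => /(allP keycheck) /implyP; exact.
Qed.

Definition g i := nth (o 1, false) G12 i.
Definition rng (q : nat * nat * nat * nat) :=
  let: (i, j, k, l) := q in all (fun n => 0 < n <= 6) [:: i; j; k; l].
Lemma rng_all : all rng (nest_circuits ++ nest_cocircuits). Proof. by vm_compute. Qed.
Lemma qidx_ok : all (fun q => all (fun x => qb q x == (index x G12 \in qidx q)) G12)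
  (nest_circuits ++ nest_cocircuits). Proof. by vm_compute. Qed.
Lemma qidx_lt : all (fun q => all (fun i => i < 12) (qidx q)) (nest_circuits ++ nest_cocircuits).
Proof. by vm_compute. Qed.

Lemma ix_o n : 0 < n <= 6 -> ix n = o n.
Proof.
case: n => [|n] //= Hn; apply: val_inj; rewrite /= inordK //.
by case: n Hn => [|[|[|[|[|[|n]]]]]].
Qed.

Lemma mem_quadn q x : rng q -> (x \in quadn q) = qb q x.
Proof.
case: q => [[[i j] k] l] /=; move=> /and5P[ri rj rk rl _].
by rewrite /quad !inE !ix_o // !orbA.
Qed.

Lemma qb_idx q x : q \in nest_circuits ++ nest_cocircuits -> qb q x = (index x G12 \in qidx q).
Proof. by move=> qin; apply/eqP; exact: (allP (allP qidx_ok q qin) x (memG12 x)). Qed.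

Lemma nth_bits (C : {set Gnd}) i : i < 12 -> nth false (bitsof (fun x => x \in C)) i = (g i \in C).
Proof. by move=> lt; rewrite (nth_map (o 1, false)) // sizeG12. Qed.
Lemma index_g i : i < 12 -> index (g i) G12 = i.
Proof. by move=> lt; rewrite /g index_uniq ?sizeG12 ?uniqG12. Qed.
Lemma g_index x : g (index x G12) = x.
Proof. by rewrite /g nth_index ?memG12. Qed.
Lemma index_lt x : index x G12 < 12.
Proof. by rewrite -sizeG12 index_mem memG12. Qed.

Lemma card_count_bits (C : {set Gnd}) : count id (bitsof (fun x => x \in C)) = #|C|.
Proof. by rewrite count_map card_count; apply: eq_count. Qed.

Lemma chk_circuit M C : std_nest M -> circuit M C -> #|C| <= 6 -> chk (bitsof (fun x => x \in C)).
Proof.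
move=> [r6 [_ [Hc Hd]]] cC c6.
apply/and4P; split.
- rewrite card_count_bits card_gt0; apply/negP => /eqP C0.
  by move: cC; rewrite C0 /circuit /min_dep indep0.
- by rewrite card_count_bits.
- apply/allP => q qin.
  have qin' : q \in nest_circuits ++ nest_cocircuits by rewrite mem_cat qin orbT.
  have rq := allP rng_all q qin'; have lt := allP qidx_lt q qin'; have cD := Hd q qin.
  apply/allP => i iq; apply/implyP => si.
  have i12 := allP lt i iq.
  rewrite nth_bits // in si.
  have gD : g i \in quadn q by rewrite mem_quadn // qb_idx // index_g.
  apply/negPn/negP => /hasPn H.
  apply: (circuit_ortho cC cD si gD) => y yC yD.
  have jq : index y G12 \in qidx q by rewrite -qb_idx // -mem_quadn.
  have := H _ jq; rewrite nth_bits ?index_lt // g_index yC andbT negbK => /eqP <-.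
  by rewrite g_index.
- apply/allP => q qin.
  have qin' : q \in nest_circuits ++ nest_cocircuits by rewrite mem_cat qin.
  have rq := allP rng_all q qin'; have cQ := Hc q qin.
  apply/implyP => /allP Hall.
  have sQC : quadn q \subset C.
    apply/subsetP => y; rewrite mem_quadn // qb_idx // => jq.
    by have := Hall _ jq; rewrite nth_bits ?index_lt // g_index.
  have eQC := circuit_sub_eq cC cQ sQC.
  apply/allP => j; rewrite mem_iota /= add0n => j12; apply/implyP.
  by rewrite nth_bits // -eQC mem_quadn // qb_idx // index_g.
Qed.

Definition six1q (q : nat * nat * nat * nat) := let: (i, j, k, l) := q in six1 (ix i) (ix j) (ix k) (ix l).
Definition six2q (q : nat * nat * nat * nat) := let: (i, j, k, l) := q in six2 (ix i) (ix j) (ix k) (ix l).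

Lemma mem_E x : (x \in Eset) = ~~ x.2.
Proof. apply/imsetP/idP => [[i _ ->] //|]; case: x => i [] // _; by exists i. Qed.
Lemma mem_E' x : (x \in E'set) = x.2.
Proof. apply/imsetP/idP => [[i _ ->] //|]; case: x => i [] // _; by exists i. Qed.

Lemma mem_six1 i j k l x :
  (x \in six1 i j k l) = [|| x == e i, x == e j | [&& x.2, x != e' k & x != e' l]].
Proof. rewrite /six1 !inE mem_E' negb_or -orbA. by case: (x.2); rewrite /= ?andbT ?andbF. Qed.
Lemma mem_six2 i j k l x :
  (x \in six2 i j k l) = [|| [&& ~~ x.2, x != e i & x != e j], x == e' k | x == e' l].
Proof. rewrite /six2 !inE mem_E negb_or. by case: (x.2); rewrite /= ?andbT ?andbF. Qed.

Lemma mem_six1q q x : rng q -> (x \in six1q q) = s1b q x.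
Proof.
case: q => [[[i j] k] l] /=; move=> /and5P[ri rj rk rl _].
by rewrite mem_six1 !ix_o.
Qed.
Lemma mem_six2q q x : rng q -> (x \in six2q q) = s2b q x.
Proof.
case: q => [[[i j] k] l] /=; move=> /and5P[ri rj rk rl _].
by rewrite mem_six2 !ix_o.
Qed.

Lemma bits_set (C : {set Gnd}) p : bitsof (fun x => x \in C) = bitsof p -> forall x, (x \in C) = p x.
Proof. by move/eq_in_map => H x; exact: H x (memG12 x). Qed.

Lemma rng_c q : q \in nest_circuits -> rng q.
Proof. by move=> qin; apply: (allP rng_all); rewrite mem_cat qin. Qed.
Lemma rng_cc q : q \in nest_cocircuits -> rng q.
Proof. by move=> qin; apply: (allP rng_all); rewrite mem_cat qin orbT. Qed.

Lemma classify M C : std_nest M -> circuit M C -> #|C| <= 6 ->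
  (exists2 q, q \in nest_circuits & C = quadn q) \/
  (exists2 q, q \in nest_circuits & C = six1q q) \/
  (exists2 q, q \in nest_circuits & C = six2q q) \/
  C = Eset \/ C = E'set.
Proof.
move=> nM cC c6.
have := key _ (chk_circuit nM cC c6); rewrite size_map sizeG12 => /(_ erefl).
rewrite !mem_cat => /or4P[| | |].
- case/mapP => q qin /bits_set H; left; exists q => //; apply/setP => x.
  by rewrite H mem_quadn // rng_c.
- case/mapP => q qin /bits_set H; right; left; exists q => //; apply/setP => x.
  by rewrite H mem_six1q // rng_c.
- case/mapP => q qin /bits_set H; right; right; left; exists q => //; apply/setP => x.
  by rewrite H mem_six2q // rng_c.
- rewrite !inE => /orP[] /eqP /bits_set H; [do 3 right; left | do 4 right];
  apply/setP => x; by rewrite H ?mem_E ?mem_E'.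
Qed.

Lemma card_char (A : {set Gnd}) p : (forall x, (x \in A) = p x) -> #|A| = count p G12.
Proof. by move=> H; rewrite card_count; apply: eq_count. Qed.

Lemma cnt_all : all (fun q => [&& count (qb q) G12 == 4, count (s1b q) G12 == 6 &
   count (s2b q) G12 == 6]) nest_circuits.
Proof. by vm_compute. Qed.

Lemma card_quadn q : q \in nest_circuits -> #|quadn q| = 4.
Proof.
move=> qin; rewrite (@card_char _ (qb q)); first by case/and3P: (allP cnt_all q qin) => /eqP.
by move=> x; rewrite mem_quadn // rng_c.
Qed.
Lemma card_six1q q : q \in nest_circuits -> #|six1q q| = 6.
Proof.
move=> qin; rewrite (@card_char _ (s1b q)); first by case/and3P: (allP cnt_all q qin) => _ /eqP.
by move=> x; rewrite mem_six1q // rng_c.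
Qed.
Lemma card_six2q q : q \in nest_circuits -> #|six2q q| = 6.
Proof.
move=> qin; rewrite (@card_char _ (s2b q)); first by case/and3P: (allP cnt_all q qin) => _ _ /eqP.
by move=> x; rewrite mem_six2q // rng_c.
Qed.
Lemma card_E : #|Eset| = 6.
Proof. by rewrite (@card_char _ (fun x => ~~ x.2)) //; exact: mem_E. Qed.
Lemma card_E' : #|E'set| = 6.
Proof. by rewrite (@card_char _ (fun x => x.2)) //; exact: mem_E'. Qed.

Lemma six_checks : all (fun q =>
  [&& has (fun q' => all (fun x => qb q' x ==> ~~ s1b q x) G12) nest_cocircuits,
      all (fun q' => ~~ all (fun x => qb q' x ==> s1b q x) G12) nest_circuits,
      has (fun q' => all (fun x => qb q' x ==> ~~ s2b q x) G12) nest_cocircuits &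
      all (fun q' => ~~ all (fun x => qb q' x ==> s2b q x) G12) nest_circuits]) nest_circuits.
Proof. by vm_compute. Qed.

Lemma six_circ M (S : {set Gnd}) p : std_nest M -> (forall x, (x \in S) = p x) -> count p G12 = 6 ->
  has (fun q' => all (fun x => qb q' x ==> ~~ p x) G12) nest_cocircuits ->
  all (fun q' => ~~ all (fun x => qb q' x ==> p x) G12) nest_circuits -> circuit M S.
Proof.
move=> nM Hp c6 Hhas Hno.
have [r6 [_ [Hc Hd]]] := nM.
have cS : #|S| = 6 by rewrite (card_char Hp).
apply/andP; split.
  case/hasP: Hhas => q' q'in /allP Hs.
  apply: (@dep6 _ _ S (quadn q')); [by rewrite r6 | exact: Hd | ].
  apply/subsetP => y; rewrite mem_quadn ?rng_cc // inE Hp => qy.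
  exact: (implyP (Hs y (memG12 y)) qy).
apply/forallP => Y; apply/implyP => pY; apply/negPn/negP => dY.
have [C cC sCY] := dep_circuit dY.
have sCS : C \subset S := subset_trans sCY (proper_sub pY).
have c5 : #|C| < 6.
  by have := leq_ltn_trans (subset_leq_card sCY) (proper_card pY); rewrite cS.
have c6' : #|C| <= 6 by apply: ltnW.
case: (classify nM cC c6') => [[q qin Eq]|[[q qin Eq]|[[q qin Eq]|[Eq|Eq]]]].
- move: (allP Hno q qin) => /negP; apply; apply/allP => x _; apply/implyP => qx.
  rewrite -Hp; apply: (subsetP sCS); by rewrite Eq mem_quadn // rng_c.
- by move: c5; rewrite Eq card_six1q.
- by move: c5; rewrite Eq card_six2q.
- by move: c5; rewrite Eq card_E.
- by move: c5; rewrite Eq card_E'.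
Qed.

Lemma six1_S i j k l : six1 i j k l = (quad i j k l :&: Eset) :|: (E'set :\: quad i j k l).
Proof.
apply/setP => x; rewrite mem_six1 !inE mem_E mem_E'.
case: x => a [] /=; rewrite /e /e' !xpair_eqE /= ?andbT ?andbF ?orbF ?orbT ?negb_or //=.
Qed.
Lemma six2_S i j k l : six2 i j k l = (Eset :\: quad i j k l) :|: (quad i j k l :&: E'set).
Proof.
apply/setP => x; rewrite mem_six2 !inE mem_E mem_E'.
case: x => a [] /=; rewrite /e /e' !xpair_eqE /= ?andbT ?andbF ?orbF ?orbT ?negb_or //=.
Qed.

Lemma six1q_S q : six1q q = (quadn q :&: Eset) :|: (E'set :\: quadn q).
Proof. by case: q => [[[i j] k] l]; rewrite /six1q six1_S. Qed.
Lemma six2q_S q : six2q q = (Eset :\: quadn q) :|: (quadn q :&: E'set).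
Proof. by case: q => [[[i j] k] l]; rewrite /six2q six2_S. Qed.

Lemma six1q_circ M q : std_nest M -> q \in nest_circuits -> circuit M (six1q q).
Proof.
move=> nM qin; case/and4P: (allP six_checks q qin) => h1 h2 _ _.
apply: (six_circ nM _ _ h1 h2) => [x|]; first by rewrite mem_six1q // rng_c.
by case/and3P: (allP cnt_all q qin) => _ /eqP.
Qed.
Lemma six2q_circ M q : std_nest M -> q \in nest_circuits -> circuit M (six2q q).
Proof.
move=> nM qin; case/and4P: (allP six_checks q qin) => _ _ h1 h2.
apply: (six_circ nM _ _ h1 h2) => [x|]; first by rewrite mem_six2q // rng_c.
by case/and3P: (allP cnt_all q qin) => _ _ /eqP.
Qed.

Theorem lemma3p3 (M : matroid Gnd) : std_nest M ->
  (* (i) *)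
  (forall C : {set Gnd}, circuit M C -> ~~ spanning M C -> #|C| = 4 \/ #|C| = 6) /\
  (* (ii) *)
  (forall C : {set Gnd}, circuit M C -> #|C| = 4 ->
     exists2 q, q \in nest_circuits & C = quadn q) /\
  (* (iii) *)
  (forall i j k l : 'I_6, circuit M (quad i j k l) ->
     circuit M (six1 i j k l) /\ #|six1 i j k l| = 6 /\
     circuit M (six2 i j k l) /\ #|six2 i j k l| = 6) /\
  (* (iv) *)
  (forall C : {set Gnd}, circuit M C -> #|C| = 6 ->
     ~ (exists i j k l : 'I_6, circuit M (quad i j k l) /\
          (C = six1 i j k l \/ C = six2 i j k l)) ->
     C = Eset \/ C = E'set).
Proof.
move=> nM; have [r6 [_ [Hc Hd]]] := nM.
have cls : forall C, circuit M C -> #|C| <= 6 ->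
   (exists2 q, q \in nest_circuits & C = quadn q) \/ #|C| = 6.
  move=> C cC c6; case: (classify nM cC c6) => [H|[[q qin ->]|[[q qin ->]|[->|->]]]].
  - by left.
  - by right; exact: card_six1q.
  - by right; exact: card_six2q.
  - by right; exact: card_E.
  - by right; exact: card_E'.
split.
  move=> C cC nsp.
  have c6 : #|C| <= 6.
    rewrite leqNgt; apply/negP => c7.
    have /card_gt0P[x xC] : 0 < #|C| by apply: leq_trans c7.
    have iJ : indep M (C :\ x) := circuit_proper cC (properD1 xC).
    have cJ : #|C :\ x| = 6.
      apply/eqP; rewrite eqn_leq; apply/andP; split; first by have := indep_le iJ; rewrite r6.
      by move: c7; rewrite (cardsD1 x C) xC.
    move/negP: nsp; apply; rewrite /spanning r6 eqn_leq; apply/andP; split.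
      apply/bigmax_leqP => A /andP[iA _]; by have := indep_le iA; rewrite r6.
    apply: leq_trans (eq_leq (esym cJ)) _.
    by apply: (leq_bigmax_cond (C :\ x)); rewrite iJ subsetDl.
  case: (cls C cC c6) => [[q qin ->]|->]; [left; exact: card_quadn | by right].
split.
  move=> C cC c4; case: (cls C cC) => [|//|]; first by rewrite c4.
  by rewrite c4.
split.
  move=> i j k l cQ.
  have c4 : #|quad i j k l| <= 4.
    have -> : quad i j k l = [set x in [:: e i; e j; e' k; e' l]].
      by apply/setP => x; rewrite !inE ?orbA ?orbF.
    by rewrite cardsE; exact: card_size.
  case: (cls _ cQ (leq_trans c4 _)) => [//|[q qin Eq]|c6]; last by move: c4; rewrite c6.
  have E1 : six1 i j k l = six1q q by rewrite six1_S six1q_S Eq.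
  have E2 : six2 i j k l = six2q q by rewrite six2_S six2q_S Eq.
  rewrite E1 E2 card_six1q // card_six2q //.
  by split; [exact: six1q_circ | split => //; split; [exact: six2q_circ|]].
move=> C cC c6 Hn.
case: (classify nM cC (eq_leq c6)) => [[q qin Eq]|[[q qin Eq]|[[q qin Eq]|[->|->]]]];
  [ | | | by left | by right].
- by move: c6; rewrite Eq card_quadn.
- case: Hn; move: Eq (Hc q qin); case: q {qin} => [[[i j] k] l] /= Eq cq.
  by exists (ix i), (ix j), (ix k), (ix l); split => //; left.
- case: Hn; move: Eq (Hc q qin); case: q {qin} => [[[i j] k] l] /= Eq cq.
  by exists (ix i), (ix j), (ix k), (ix l); split => //; right.
Qed.
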